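(* Consider the uplink access-probability optimization problem $$\max_{\mathbf p=(p_1,\dots,p_N)} \ \eta(\mathbf p)=\sum_{\boldsymbol\sigma\in\mathcal I}\sum_{j=1}^N R_j^{\boldsymbol\sigma}\,\sigma_j\,\pi(\boldsymbol\sigma)$$ subject to $\mathsf{EC}_j(\mathbf p;\theta_j)\ge \mathsf{EB}_j(\theta_j)$ and $0<p_j\le 1$ for all $j=1,\dots,N$, where all quantities are as defined in the context. This optimization problem is non-concave with respect to the access probability vector $\mathbf p$.
   Context: A coordinator with $M$ photo-detectors serves $N$ devices ($N>M$), each with a single LED. In each time slot, device $j$ transmits independently with access probability $p_j$, and its line-of-sight link is unblocked independently with probability $\beta_j\in(0,1]$. A state is a vector $\boldsymbol\sigma=(\sigma_1,\dots,\sigma_N)\in\{0,1\}^N$, where $\sigma_j=1$ means device $j$ transmits and is unblocked. Its probability is $\pi(\boldsymbol\sigma)=\prod_{k=1}^N\big[(1-\sigma_k)(1-p_k\beta_k)+\sigma_k p_k\beta_k\big]$. The set of feasible access states is $\mathcal I=\{\boldsymbol\sigma:\sum_j\sigma_j\le M\}$. In a feasible state $\boldsymbol\sigma$ with $\sigma_j=1$, device $j$ achieves rate $R_j^{\boldsymbol\sigma}=B\log_2(1+\gamma_j^{\boldsymbol\sigma})$. Here $B>0$ is the bandwidth and $\gamma_j^{\boldsymbol\sigma}$ is the SINR of device $j$ under ideal (error-free) MMSE successive interference cancellation at the coordinator: $$\gamma_j^{\boldsymbol\sigma}=\xi^2P_t^2\,\mathbf h_j^T\Big(\sum_{k}\xi^2P_t^2\mathbf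 h_k\mathbf h_k^T+\sigma_{\mathrm{VLC}}^2\mathbf I_M\Big)^{-1}\mathbf h_j .$$ The sum runs over the active devices $k$ decoded after $j$ in the SIC order. The parameters are as follows: - $\mathbf h_j\in\mathbb R_{\ge0}^M$ is the fixed line-of-sight channel gain vector of device $j$; - $\xi>0$ is the detector responsivity; - $P_t>0$ is the transmit power; - $\sigma_{\mathrm{VLC}}^2>0$ is the noise variance. In an infeasible state, no device is decoded and it has rate $0$. The effective capacity of device $j$ with QoS exponent $\theta_j>0$ is $$\mathsf{EC}_j(\mathbf p;\theta_j)=-\frac1{\theta_j}\ln\Big\{1-\sum_{\boldsymbol\sigma\in\mathcal I}\big(1-e^{-\theta_jR_j^{\boldsymbol\sigma}}\big)\sigma_j\pi(\boldsymbol\sigma)\Big\}.$$ $\mathsf{EB}_j(\theta_j)$ is the effective bandwidth of device $j$'s arrival process: $\mathsf{EB}_j(\theta_j)=\frac1{\theta_j}\lim_{t\to\infty}\frac1t\ln\mathbb E[e^{\theta_jA_j(t)}]$, where $A_j(t)$ is the accumulated arrival process of device $j$ over $[0,t)$. A maximization problem is called concave if its objective is concave and its feasible set is convex. *)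

(* Defs.v *)
From HB Require Import structures.
From mathcomp Require Import all_boot all_order all_algebra all_fingroup.
From mathcomp Require Import all_classical all_reals all_analysis.
Set Implicit Arguments. Unset Strict Implicit. Unset Printing Implicit Defensive.
Import Order.TTheory GRing.Theory Num.Theory.
Local Open Scope ring_scope.

Section VLC.
Variables (R : realType) (M N : nat).

(* A state sigma : sigma j = true iff device j transmits and is unblocked. *)
Definition state := {ffun 'I_N -> bool}.

Definition state_prob (p beta : 'I_N -> R) (s : state) : R :=
  \prod_(k < N) ((1 - (s k)%:R) * (1 - p k * beta k) + (s k)%:R * (p k * beta k)).

Definition feasible_state (s : state) : bool := (\sum_(k < N) nat_of_bool (s k) <= M)%N.

(* SINR of device j in state s under ideal MMSE-SIC with decoding order
   given by the permutation ord: device k is decoded after j iff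
   ord j < ord k. *)
Definition sinr (h : 'I_N -> 'cV[R]_M) (xi Pt s2 : R) (ord : {perm 'I_N})
    (s : state) (j : 'I_N) : R :=
  let c := xi ^+ 2 * Pt ^+ 2 in
  (c *: ((h j)^T *m invmx (\sum_(k < N | s k && (ord j < ord k)%N)
                               (c *: (h k *m (h k)^T)) + s2%:M) *m h j)) ord0 ord0.

Definition log2 (x : R) : R := ln x / ln 2.

Definition rate (h : 'I_N -> 'cV[R]_M) (B xi Pt s2 : R) (ord : {perm 'I_N})
    (s : state) (j : 'I_N) : R :=
  if feasible_state s && s j then B * log2 (1 + sinr h xi Pt s2 ord s j) else 0.

Definition sum_rate_obj (h : 'I_N -> 'cV[R]_M) (beta : 'I_N -> R) (B xi Pt s2 : R)
    (ord : {perm 'I_N}) (p : 'I_N -> R) : R :=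
  \sum_(s : state | feasible_state s) \sum_(j < N)
     rate h B xi Pt s2 ord s j * (s j)%:R * state_prob p beta s.

Definition eff_cap (h : 'I_N -> 'cV[R]_M) (beta : 'I_N -> R) (B xi Pt s2 : R)
    (ord : {perm 'I_N}) (theta : R) (p : 'I_N -> R) (j : 'I_N) : R :=
  - theta^-1 * ln (1 - \sum_(s : state | feasible_state s)
      (1 - expR (- theta * rate h B xi Pt s2 ord s j)) * (s j)%:R * state_prob p beta s).

Definition feasible_set (h : 'I_N -> 'cV[R]_M) (beta theta EB : 'I_N -> R)
    (B xi Pt s2 : R) (ord : {perm 'I_N}) (p : 'I_N -> R) : Prop :=
  forall j : 'I_N, 0 < p j <= 1 /\
    EB j <= eff_cap h beta B xi Pt s2 ord (theta j) p j.

End VLC.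

Definition convex_comb (R : realType) (N : nat) (t : R) (x y : 'I_N -> R) : 'I_N -> R :=
  fun i => t * x i + (1 - t) * y i.

Definition convex_set (R : realType) (N : nat) (S : ('I_N -> R) -> Prop) : Prop :=
  forall x y (t : R), S x -> S y -> 0 <= t <= 1 -> S (convex_comb t x y).

Definition concave_on (R : realType) (N : nat) (S : ('I_N -> R) -> Prop)
    (f : ('I_N -> R) -> R) : Prop :=
  forall x y (t : R), S x -> S y -> 0 <= t <= 1 ->
    t * f x + (1 - t) * f y <= f (convex_comb t x y).

Definition concave_max_problem (R : realType) (N : nat) (S : ('I_N -> R) -> Prop)
    (f : ('I_N -> R) -> R) : Prop :=
  convex_set S /\ concave_on S f.

(* Main.v *)
Require Import Defs.
From HB Require Import structures.
From mathcomp Require Import all_boot all_order all_algebra all_fingroup.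
From mathcomp Require Import all_classical all_reals all_analysis.
From mathcomp Require Import lra.
Import Order.TTheory GRing.Theory Num.Theory.
Local Open Scope ring_scope.

Section Cex.
Variables (R : realType) (M N : nat).
Hypotheses (hM : (0 < M)%N) (hMN : (M < N)%N).

Definition hh (j : 'I_N) : 'cV[R]_M := if (j == 0 :> nat) then const_mx 1 else 0.
Definition b1 : 'I_N -> R := fun _ => 1.
Definition rr : R := log2 (1 + M%:R).

Lemma rate_eq (s : state N) (j : 'I_N) :
  rate hh 1 1 1 1 1%g s j = if feasible_state M s && s j && (j == 0 :> nat) then rr else 0.
Proof.
rewrite /rate; case: (feasible_state M s && s j) => //=.
case: eqP => hj.
- rewrite /sinr /rr mul1r; congr (log2 (1 + _)).
  rewrite big1; last first.
    move=> k /andP[_]; rewrite !perm1 hj => hk.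
    by rewrite /hh (negbTE (lt0n_neq0 hk)) trmx0 mulmx0 scaler0.
  rewrite add0r invmx1 mulmx1 expr1n mulr1 scale1r /hh hj eqxx !mxE.
  under eq_bigr do rewrite !mxE mulr1.
  by rewrite sumr_const card_ord.
- rewrite /sinr /hh.
  have -> : (val j == 0%N) = false by apply/eqP.
  by rewrite mulmx0 scaler0 mxE addr0 /log2 ln1 mul0r mulr0.
Qed.

Lemma rr_gt0 : 0 < rr.
Proof.
rewrite /rr /log2 divr_gt0 // ln_gt0 //; last by rewrite ltrDl ltr01.
by rewrite ltrDl ltr0n.
Qed.

Definition pt (a q : R) : 'I_N -> R :=
  fun k => if (k == 0 :> nat) then a else if (k < M)%N then 1 else q.
Definition sstar : state N := [ffun k : 'I_N => (k < M)%N].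

Lemma prob_star a q : state_prob (pt a q) b1 sstar = a * (1 - q) ^+ (N - M).
Proof.
rewrite /state_prob.
under eq_bigr => k _ do rewrite ffunE /b1 mulr1 /pt.
pose g (i : nat) := if (i < M)%N then (if (i == 0)%N then a else 1) else 1 - q.
rewrite (eq_bigr (fun k : 'I_N => g k)); last first.
  move=> k _; rewrite /g; case h0: (val k == 0%N); case hk: (k < M)%N => /=;
    rewrite ?subrr ?subr0 ?mul0r ?mul1r ?add0r ?addr0 ?mulr1 //.
  by move/eqP: h0 => h0; rewrite h0 hM in hk.
rewrite -(big_mkord xpredT g) (big_cat_nat (n := M)) //=; last exact: ltnW.
rewrite big_ltn // {1}/g hM eqxx.
rewrite big_nat_cond big1; last first.
  move=> i /andP[/andP[h1 h2] _]; by rewrite /g h2 (gtn_eqF h1).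
rewrite mulr1 big_nat_cond (eq_bigr (fun _ => 1 - q)); last first.
  by move=> i /andP[/andP[h1 _] _]; rewrite /g ltnNge h1.
by rewrite -big_nat_cond prodr_const_nat.
Qed.

Lemma sum_lt (k0 : 'I_N) : (M <= k0)%N ->
  (\sum_(k < N) nat_of_bool ((k < M) || (k == k0)))%N = M.+1.
Proof.
move=> hk0.
rewrite (eq_bigr (fun k : 'I_N => nat_of_bool (k < M)%N + nat_of_bool (k == k0))%N); last first.
  move=> k _; case: (ltnP k M) => hk /=; last by rewrite add0n.
  suff -> : (k == k0) = false by [].
  by apply/negbTE; apply/eqP => e; move: hk; rewrite e ltnNge hk0.
rewrite big_split /=.
have -> : (\sum_(k < N) nat_of_bool (k == k0))%N = 1%N.
  rewrite (bigD1 k0) //= eqxx big1 // => i /negbTE ->; done.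
rewrite -(big_mkord xpredT (fun i => nat_of_bool (i < M)%N)) (big_cat_nat (n := M)) //=; last exact: ltnW.
rewrite big_nat_cond (eq_bigr (fun _ => 1%N)); last by move=> i /andP[/andP[_ ->]].
rewrite -big_nat_cond sum_nat_const_nat big_nat_cond big1; last first.
  by move=> i /andP[/andP[h _] _]; rewrite ltnNge h.
by rewrite subn0 muln1 addn0 addn1.
Qed.


Lemma sum_ltM : (\sum_(k < N) nat_of_bool (k < M)%N)%N = M.
Proof.
rewrite -(big_mkord xpredT (fun i => nat_of_bool (i < M)%N)) (big_cat_nat (n := M)) //=; last exact: ltnW.
rewrite big_nat_cond (eq_bigr (fun _ => 1%N)); last by move=> i /andP[/andP[_ ->]].
rewrite -big_nat_cond sum_nat_const_nat big_nat_cond big1; last first.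
  by move=> i /andP[/andP[h _] _]; rewrite ltnNge h.
by rewrite subn0 muln1 addn0.
Qed.

Lemma feas_star : feasible_state M sstar.
Proof.
rewrite /feasible_state; under eq_bigr do rewrite ffunE.
by rewrite sum_ltM.
Qed.

Definition j0 : 'I_N := Ordinal (ltn_trans hM hMN).

Lemma term_eq a q (s : state N) : feasible_state M s ->
  (s j0)%:R * state_prob (pt a q) b1 s = if s == sstar then a * (1 - q) ^+ (N - M) else 0.
Proof.
move=> hf.
case: (eqVneq s sstar) => [-> | hne].
  by rewrite ffunE /= hM mul1r prob_star.
case hs0: (s j0); last by rewrite mul0r.
rewrite mul1r.
case: (boolP [forall k : 'I_N, (k < M)%N ==> s k]) => hall.
  exfalso.
  have /existsP [k hk] : [exists k : 'I_N, s k != sstar k].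
    apply: contraR hne => /existsPn h; apply/eqP/ffunP => k; apply/eqP.
    by move: (h k); rewrite negbK.
  move: hk; rewrite ffunE /=.
  case: (ltnP k M) => hkM.
    by rewrite (implyP (forallP hall k) hkM).
  case hsk: (s k) => // _.
  move: hf; rewrite /feasible_state.
  have : (\sum_(i < N) nat_of_bool ((i < M) || (i == k)) <= \sum_(i < N) nat_of_bool (s i))%N.
    apply: leq_sum => i _.
    case/boolP: ((i < M)%N || (i == k)) => //= /orP [hi|/eqP ->].
      by rewrite (implyP (forallP hall i) hi).
    by rewrite hsk.
  rewrite sum_lt // => h1 h2.
  by have := leq_trans h1 h2; rewrite ltnn.
move/forallPn: hall => [k]; rewrite negb_imply => /andP[hkM hsk].
have hk0 : (val k == 0%N) = false.
  apply/negbTE/eqP => e.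
  have ek : k = j0 by apply: val_inj.
  by move: hsk; rewrite ek hs0.
rewrite /state_prob (bigD1 k) //= (negbTE hsk) /pt hk0 hkM /b1.
by rewrite !mulr1 subrr mulr0 add0r mul0r.
Qed.

Lemma obj_eq a q : sum_rate_obj hh b1 1 1 1 1 1%g (pt a q) = rr * (a * (1 - q) ^+ (N - M)).
Proof.
rewrite /sum_rate_obj.
rewrite (eq_bigr (fun s => rr * (if s == sstar then a * (1 - q) ^+ (N - M) else 0))); last first.
  move=> s hf; rewrite -term_eq // (bigD1 j0) //= big1; last first.
    move=> j hj; rewrite rate_eq.
    have -> : (val j == 0%N) = false.
      by apply/negbTE; apply: contra hj => /eqP e; apply/eqP/val_inj.
    by rewrite andbF !mul0r.
  rewrite addr0 rate_eq hf /=.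
  by case: (s j0); rewrite /= ?mul0r ?mulr0 ?mulr1 ?mul1r.
rewrite -big_distrr /= (bigD1 sstar) ?feas_star //= eqxx big1 ?addr0 //.
by move=> s /andP[_ /negbTE ->].
Qed.

Lemma eff_ge0 (p : 'I_N -> R) (j : 'I_N) : (forall k, 0 <= p k <= 1) ->
  0 <= eff_cap hh b1 1 1 1 1 1%g 1 p j.
Proof.
move=> hp.
rewrite /eff_cap invr1 mulN1r oppr_ge0; apply: ln_le0.
rewrite gerBl; apply: sumr_ge0 => s _.
apply: mulr_ge0; first apply: mulr_ge0.
- rewrite subr_ge0 expR_le1 mulN1r oppr_le0 rate_eq.
  by case: ifP => _ //; apply: ltW; apply: rr_gt0.
- by rewrite ler0n.
- apply: prodr_ge0 => k _; rewrite /b1 mulr1.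
  have /andP[h0 h1] := hp k.
  by case: (s k); rewrite /= ?subrr ?mul0r ?add0r ?subr0 ?mul1r ?mulr0 ?addr0 // subr_ge0.
Qed.
End Cex.

Theorem theorem3p1 (R : realType) (M N : nat) (hM : (0 < M)%N) (hMN : (M < N)%N) :
  exists (h : 'I_N -> 'cV[R]_M) (beta theta EB : 'I_N -> R) (B xi Pt s2 : R)
         (ord : {perm 'I_N}),
    (forall j i, 0 <= h j i ord0) /\
    (forall j, 0 < beta j <= 1) /\
    (forall j, 0 < theta j) /\
    (forall j, 0 <= EB j) /\
    0 < B /\ 0 < xi /\ 0 < Pt /\ 0 < s2 /\
    ~ concave_max_problem (feasible_set h beta theta EB B xi Pt s2 ord)
                          (sum_rate_obj h beta B xi Pt s2 ord).
Proof.
exists (hh R M N), (b1 R N), (fun _ => 1), (fun _ => 0), 1, 1, 1, 1, 1%g.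
split.
  by move=> j i; rewrite /hh; case: ifP => _; rewrite mxE.
split; first by move=> j; rewrite /b1 ltr01 lexx.
split; first by move=> j; rewrite ltr01.
split; first by move=> j.
do 4 (split; first exact: ltr01).
move=> [_ Hc].
have Sp : forall a q : R, 0 < a <= 1 -> 0 < q <= 1 ->
    feasible_set (hh R M N) (b1 R N) (fun _ => 1) (fun _ => 0) 1 1 1 1 1%g (pt R M N a q).
  move=> a q /andP[a0 a1] /andP[q0 q1] j.
  have hp : forall k, 0 < pt R M N a q k <= 1.
    move=> k; rewrite /pt; case: ifP => _; first by rewrite a0 a1.
    by case: ifP => _; rewrite ?ltr01 ?lexx ?q0 ?q1.
  split; first exact: hp.
  apply: eff_ge0 => //.
  by move=> k; have /andP[h1 ->] := hp k; rewrite ltW.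
have hx := Sp 1 (1/2) ltac:(lra) ltac:(lra).
have hy := Sp (1/2) 1 ltac:(lra) ltac:(lra).
have := Hc _ _ (1/2) hx hy ltac:(lra).
have -> : convex_comb (1/2) (pt R M N 1 (1/2)) (pt R M N (1/2) 1) = pt R M N (3/4) (3/4) :> ('I_N -> R).
  apply: funext => k; rewrite /convex_comb /pt.
  by case: ifP => _; [|case: ifP => _]; lra.
rewrite !obj_eq //.
have hK : (0 < N - M)%N by rewrite subn_gt0.
rewrite subrr expr0n /= (gtn_eqF hK) !mulr0 addr0.
have -> : (1 - 3/4 : R) = 1/2 * (1/2) by lra.
have -> : (1 - 1/2 : R) = 1/2 by lra.
set u := (1/2 : R) ^+ (N - M).
have -> : (1/2*(1/2) : R)^+(N-M) = u*u by rewrite /u -exprMn.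
have u0 : 0 < u by rewrite exprn_gt0 //; lra.
have u1 : u <= 1/2.
  rewrite /u; case: (N - M)%N hK => // K _.
  rewrite exprS; have : (1/2 : R) ^+ K <= 1 by apply: exprn_ile1; lra.
  lra.
have r0 := @rr_gt0 R M hM.
set r := rr R M in r0 *.
apply/negP; rewrite -ltNge mul1r.
have h1 : 0 < r * u by apply: mulr_gt0.
have h2 : 0 < 1/2 - 3/4 * u by lra.
have := mulr_gt0 h1 h2.
nra.
Qed.
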